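(* Let $n \ge 3$, let $t,s\ge1$ be odd and coprime, let $r\in\mathbb{Z}$ with $r^s\equiv 1 \bmod t$, and let $a,b\in\mathbb{Z}/t$ with $a^2\equiv b^2 \equiv 1 \bmod t$. Let $G = (C_t\rtimes_{(r)} C_s)\rtimes_{(a,b)} Q_{2^n}$. Then, for $m \ge 1$ odd, $G$ has a quotient isomorphic to $Q_{2^n m}$ if and only if $m \mid t$, $r\equiv 1 \bmod m$, and $Q_{2^n m}\cong C_m\rtimes_{(a,b)} Q_{2^n}$.
   Context: $C_t\rtimes_{(r)}C_s = \langle u, v\mid u^t = v^s = 1, vuv^{-1} = u^r\rangle$. $Q_{2^n} = \langle x,y\mid x^{2^{n-2}}=y^2, yxy^{-1}=x^{-1}\rangle$, and $Q_{2^n}$ acts on $C_t\rtimes_{(r)}C_s$ by $x: u\mapsto u^a, v\mapsto v$ and $y: u\mapsto u^b, v \mapsto v$; $G$ is the resulting semidirect product. Similarly $C_m\rtimes_{(a,b)}Q_{2^n}$ denotes the semidirect product in which $x$ and $y$ act on a generator of $C_m$ by raising to the powers $a$ and $b$ (read mod $m$). $Q_{4k}=\langle x,y\mid x^k=y^2,yxy^{-1}=x^{-1}\rangle$. *)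

(* Defs.v *)
From mathcomp Require Import all_boot all_order all_algebra all_fingroup.
Set Implicit Arguments. Unset Strict Implicit. Unset Printing Implicit Defensive.
Local Open Scope group_scope.

(* Generalized quaternion group Q_{4k} = < x, y | x^k = y^2, y x y^-1 = x^-1 >.
   [isQ G k] : the finite group G is isomorphic to Q_{4k}. *)
Definition isQ (gT : finGroupType) (G : {set gT}) (k : nat) : Prop :=
  G \isog Grp (x : y : (x ^+ k = y ^+ 2, y * x * y^-1 = x^-1)).

Definition isG (gT : finGroupType) (G : {set gT}) (n t s : nat) (r : int)
    (a b : nat) : Prop :=
  G \isog Grp (u : v : x : y :
    (u ^+ t = 1, v ^+ s = 1, v * u * v^-1 = u ^+ (absz (r %% t)%Z),
     x ^+ (2 ^ (n - 2)) = y ^+ 2, y * x * y^-1 = x^-1,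
     x * u * x^-1 = u ^+ a, x * v * x^-1 = v,
     y * u * y^-1 = u ^+ b, y * v * y^-1 = v)).

Definition isCQ (gT : finGroupType) (G : {set gT}) (m a b n : nat) : Prop :=
  G \isog Grp (w : x : y :
    (w ^+ m = 1, x ^+ (2 ^ (n - 2)) = y ^+ 2, y * x * y^-1 = x^-1,
     x * w * x^-1 = w ^+ a, y * w * y^-1 = w ^+ b)).

(* Main.v *)
Require Import Defs.
From mathcomp Require Import all_boot all_order all_algebra all_fingroup all_solvable.
From mathcomp Require Import zify.
Set Implicit Arguments. Unset Strict Implicit. Unset Printing Implicit Defensive.
Local Open Scope group_scope.
Module QModel.
Import GRing.Theory.
Section Model.
Variable p' k : nat.
Hypothesis hk : (k + k = p'.+2)%N.
Definition ZT := 'I_p'.+2.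
Definition TT := (ZT * bool)%type.
Definition KK : ZT := (k%:R)%R.
Lemma KK2 : (KK + KK = 0)%R.
Proof. by rewrite /KK -natrD hk Zp_nat; apply/val_inj; rewrite /= modnn. Qed.

Definition fX (q : TT) : TT := ((q.1 + 1)%R, q.2).
Definition fY (q : TT) : TT :=
  if q.2 then ((KK - q.1)%R, false) else ((- q.1)%R, true).
Lemma fX_inj : injective fX.
Proof.
move=> [i e] [j f] H.
have H1 := congr1 (fun q : TT => (q.1 - 1)%R) H; have H2 := congr1 snd H.
by rewrite /= !addrK in H1; rewrite /= in H2; rewrite H1 H2.
Qed.
Lemma fY_inj : injective fY.
Proof.
move=> [i e] [j f] H; have H2 := congr1 snd H.
case: e f H H2 => -[] H H2; rewrite /fY /= in H H2 *.
- have H1 := congr1 fst H; rewrite /= in H1.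
  by move/addrI/oppr_inj: H1 => ->.
- by move: H2.
- by move: H2.
have H1 := congr1 (fun q : TT => (- q.1)%R) H.
by rewrite /= !opprK in H1; rewrite H1.
Qed.
Definition pX : {perm TT} := perm fX_inj.
Definition pY : {perm TT} := perm fY_inj.

Lemma iter_fX j (q : TT) : iter j fX q = ((q.1 + j%:R)%R, q.2).
Proof.
elim: j => [|j IH] /=; first by rewrite addr0; case: q.
by rewrite IH /fX /= -addrA -natr1.
Qed.

Lemma iter_pX j (q : TT) : iter j pX q = ((q.1 + j%:R)%R, q.2).
Proof. by rewrite -iter_fX; apply: eq_iter; apply: permE. Qed.

Lemma rel1 : pX ^+ k = pY ^+ 2.
Proof.
apply/permP => -[i e]; rewrite permX iter_pX expgS expg1 permM !permE /fY /=.
case: e => /=; last by rewrite opprK addrC.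
by rewrite -/KK opprB; congr (_, _); congr (_ + _)%R; apply/eqP; rewrite -addr_eq0 KK2.
Qed.

Lemma rel2 : pY * pX * pY^-1 = pX^-1.
Proof.
apply: (mulIg pY); rewrite -mulgA mulVg mulg1; apply: (mulgI pX).
rewrite mulKVg.
apply/permP => -[i e]; rewrite !permM !permE /fY /fX /=.
by case: e; rewrite /= opprD ?addrA subrK.
Qed.

Definition R0 := (<[pX]> <*> <[pY]>)%G.

Lemma R0_card : (2 * (k + k) <= #|R0|)%N.
Proof.
have -> : (2 * (k + k) = #|[set: TT]|)%N by rewrite cardsT card_prod card_bool card_ord hk mulnC.
apply: leq_trans (leq_imset_card (fun g : {perm TT} => g (0%R, false)) R0).
apply: subset_leq_card; apply/subsetP => -[i e] _.
have Xin : pX \in R0 by rewrite mem_gen // inE cycle_id.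
have Yin : pY \in R0 by rewrite mem_gen // inE cycle_id orbT.
case: e.
  apply/imsetP; exists (pY * pX ^+ i); first by rewrite groupM ?groupX.
  by rewrite permM permX iter_pX permE /fY /= oppr0 add0r natr_Zp.
apply/imsetP; exists (pX ^+ i); first by rewrite groupX.
by rewrite permX iter_pX /= add0r natr_Zp.
Qed.
End Model.

End QModel.
Import QModel.


Lemma conjVE (gT : finGroupType) (x y : gT) : y * x * y^-1 = x ^ y^-1.
Proof. by rewrite conjgE invgK mulgA. Qed.

Lemma Qbound (gT : finGroupType) (X Y : gT) k :
  X ^+ k = Y ^+ 2 -> Y * X * Y^-1 = X^-1 ->
  [/\ #[X] %| k.*2, <[Y]> \subset 'N(<[X]>),
      #|<[X]> <*> <[Y]>| = (#[X] * #[coset <[X]> Y])%N & #[coset <[X]> Y] %| 2].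
Proof.
rewrite conjVE => h1 h2.
have nXY : <[Y]> \subset 'N(<[X]>).
  rewrite cycle_subG -groupV; apply/normP; by rewrite -cycleJ h2 cycleV.
have oX : #[X] %| k.*2.
  rewrite order_dvdn -addnn expgD; apply/eqP.
  have : (X ^+ k) ^ Y^-1 = X ^+ k.
    by rewrite h1 conjXg conjgE invgK mulgV mulg1.
  rewrite conjXg h2 expVgn => /(congr1 (fun z => z * X ^+ k)).
  by rewrite mulVg => <-.
have Ycoset : coset <[X]> Y ^+ 2 = 1.
  rewrite -morphX; last by rewrite (subsetP nXY) ?cycle_id.
  by apply: coset_id; rewrite -h1 mem_cycle.
split => //; last by rewrite order_dvdn Ycoset.
have nJ : <[X]> <*> <[Y]> \subset 'N(<[X]>) by rewrite join_subG normG nXY.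
rewrite -(Lagrange (joing_subl _ _)) -card_quotient // quotientYidl //.
by rewrite quotient_cycle ?(subsetP nXY) ?cycle_id.
Qed.

Lemma Qstruct (gT : finGroupType) (Q : {group gT}) (X Y : gT) k :
  0 < k -> <[X]> <*> <[Y]> = Q -> X ^+ k = Y ^+ 2 -> Y * X * Y^-1 = X^-1 ->
  k.*2.*2 <= #|Q| ->
  [/\ #[X] = k.*2, X ^+ k != 1, <[X]> \subset Q &
   forall g, g \in Q -> g \notin <[X]> ->
     g ^+ 2 = X ^+ k /\ forall h, h \in <[X]> -> g * h * g^-1 = h^-1].
Proof.
move=> k0 hQ h1 h2 hc.
have [oX nXY cQ oY] := Qbound h1 h2.
rewrite hQ in cQ.
have oX2 : #[X] <= k.*2 by apply: dvdn_leq; rewrite ?double_gt0.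
have oY2 : #[coset <[X]> Y] <= 2 by apply: dvdn_leq.
rewrite cQ in hc.
have eX : #[X] = k.*2 by nia.
have eY : #[coset <[X]> Y] = 2 by nia.
have sXQ : <[X]> \subset Q by rewrite -hQ joing_subl.
have hYX j : Y * X ^+ j = X ^- j * Y.
  by rewrite -expVgn -h2 conjVE -conjXg -conjVE mulgKV.
split => //.
  apply/eqP => H; have : #[X] %| k by rewrite order_dvdn H.
  move/(dvdn_leq k0); lia.
move=> g gQ gX.
have nXQ : Q \subset 'N(<[X]>) by rewrite -hQ join_subG normG nXY.
have : coset <[X]> g \in <[coset <[X]> Y]>.
  rewrite -quotient_cycle ?(subsetP nXY) ?cycle_id // -quotientYidl //.
  by rewrite hQ mem_quotient.
case/cycleP => j; rewrite -expg_mod_order eY modn2.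
case: (odd j) => hj.
  have gY : g * Y^-1 \in <[X]>.
    apply: coset_idr; first by rewrite groupM ?groupV ?(subsetP nXQ) // -hQ mem_gen // inE cycle_id orbT.
    rewrite morphM ?morphV ?(subsetP nXQ) ?groupV // -?hQ ?mem_gen // ?inE ?cycle_id ?orbT //.
    by change (coset <[X]> g * (coset <[X]> Y)^-1 = 1); rewrite hj expg1 mulgV.
  case/cycleP: gY => i /(congr1 (fun z => z * Y)); rewrite mulgKV => ->.
  split.
    by rewrite h1 expgS expg1 expgS expg1 -mulgA (mulgA Y) hYX !mulgA mulgV mul1g.
  move=> h /cycleP[l ->].
  rewrite invMg !mulgA -(mulgA (X ^+ i) Y) hYX !mulgA mulgK.
  have cXV : commute (X ^+ i) (X ^- l).
    by apply: commuteV; apply: commuteX2; apply: commute_refl.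
  by rewrite cXV mulgK.
by case/negP: gX; apply: coset_idr; rewrite ?(subsetP nXQ) // hj.
Qed.

Lemma lt_dbl n : 0 < n -> n < n.*2.
Proof. by move=> h; rewrite -addnn -{1}[n]add0n ltn_add2r. Qed.

Lemma ord1_coprime (gT : finGroupType) (g : gT) p q :
  g ^+ p = 1 -> g ^+ q = 1 -> coprime p q -> g = 1.
Proof.
move=> hp hq cpq; apply/eqP; rewrite -order_eq1 -dvdn1 -(eqP cpq) dvdn_gcd.
by rewrite !order_dvdn hp hq eqxx.
Qed.

Lemma cyc_comm (gT : finGroupType) (X g h : gT) :
  g \in <[X]> -> h \in <[X]> -> g * h * g^-1 = h.
Proof.
move=> /cycleP[i ->] /cycleP[j ->].
by rewrite (commuteX2 i j (commute_refl X)) mulgK.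
Qed.

Lemma norm_cyc (gT : finGroupType) (u x : gT) a :
  x * u * x^-1 = u ^+ a -> x \in 'N(<[u]>).
Proof.
move=> h; rewrite -groupV inE -cycleJ -conjVE h; apply: cycleX.
Qed.

Lemma joinmem4 (gT : finGroupType) (Q : {group gT}) (u v x y : gT) :
  <[u]> <*> <[v]> <*> <[x]> <*> <[y]> = Q ->
  [/\ u \in Q, v \in Q, x \in Q & y \in Q].
Proof.
move=> hQ; have := subxx Q; rewrite -{1}hQ !join_subG !cycle_subG.
by case/andP => /andP[/andP[-> ->] ->] ->.
Qed.

Lemma analysis (gT : finGroupType) (Q : {group gT}) (X Y u v x y : gT)
    n t s m (r' a b : nat) :
  2 < n -> odd t -> odd s -> odd m -> 0 < m ->
  <[X]> <*> <[Y]> = Q -> X ^+ (2 ^ (n - 2) * m) = Y ^+ 2 -> Y * X * Y^-1 = X^-1 ->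
  (2 ^ (n - 2) * m).*2.*2 <= #|Q| ->
  <[u]> <*> <[v]> <*> <[x]> <*> <[y]> = Q ->
  u ^+ t = 1 -> v ^+ s = 1 -> v * u * v^-1 = u ^+ r' ->
  x ^+ (2 ^ (n - 2)) = y ^+ 2 -> y * x * y^-1 = x^-1 ->
  x * u * x^-1 = u ^+ a -> x * v * x^-1 = v ->
  y * u * y^-1 = u ^+ b -> y * v * y^-1 = v ->
  [/\ v = 1, #[u] = m &
     (u ^+ a = u /\ u ^+ b = u^-1) \/
     (n = 3 /\ u ^+ a = u^-1 /\ (u ^+ b = u \/ u ^+ b = u^-1))].
Proof.
move=> n3 ot os om m0 hQ h1 h2 hc hG ut vs vu xy yx xu xv yu yv.
set k := (2 ^ (n - 2) * m)%N in h1 hc.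
have k0 : 0 < k by rewrite muln_gt0 expn_gt0 m0.
have [eX nX1 sXQ Hout] := Qstruct k0 hQ h1 h2 hc.
have [uQ vQ xQ yQ] := joinmem4 hG.
have oddX g e : g \in Q -> g ^+ e = 1 -> odd e -> g \in <[X]>.
  move=> gQ ge oe; apply/negPn/negP => gX.
  have [g2 _] := Hout g gQ gX.
  have g4 : g ^+ 4 = 1.
    by rewrite (expgM g 2 2) g2 -expgM muln2 -eX expg_order.
  by case/negP: gX; rewrite (ord1_coprime g4 ge) ?group1 // (coprime_pexpl (k:=2) 2 e) // coprime2n.
have uX := oddX u t uQ ut ot.
have vX := oddX v s vQ vs os.
have notboth : ~ (x \in <[X]> /\ y \in <[X]>).
  case=> xX yX; have : Q \subset <[X]>.
    by rewrite -hG !join_subG !cycle_subG uX vX xX yX.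
  move/subset_leq_card; rewrite -orderE eX => h; move: (leq_trans hc h).
  by rewrite leqNgt lt_dbl // double_gt0.
have v1 : v = 1.
  have [g gQ [gX gv]] : exists2 g, g \in Q & (g \notin <[X]>) /\ g * v * g^-1 = v.
    case xX: (x \in <[X]>); last by exists x => //; rewrite xX.
    case yX: (y \in <[X]>); last by exists y => //; rewrite yX.
    by case: notboth; rewrite xX yX.
  have [_ Hc] := Hout g gQ gX.
  have vV : v ^+ 2 = 1 by rewrite expgS expg1 -{1}gv Hc // mulVg.
  by apply: (ord1_coprime vV vs); rewrite coprime2n.
subst v.
have hP := Qbound xy yx.
case: hP => oxd nxy cP ocx.
have cPle : #|<[x]> <*> <[y]>| <= #[x] * 2 by rewrite cP leq_mul2l dvdn_leq ?orbT.
have oxle : #[x] <= (2 ^ (n - 2)).*2 by apply: dvdn_leq; rewrite // double_gt0 expn_gt0.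
have Qeq : Q = <[u]> * (<[x]> <*> <[y]>) :> {set gT}.
  rewrite -hG cycle1 joingG1 -joingA norm_joinEr //.
  by rewrite join_subG !cycle_subG (norm_cyc xu) (norm_cyc yu).
have Qle : #|Q| <= #[u] * #|<[x]> <*> <[y]>|.
  rewrite Qeq orderE (mul_cardG <[u]>) leq_pmulr //.
have oum : #[u] %| m.
  have h := order_dvdG uX; rewrite -orderE eX -muln2 -mulnA (mulnC m) mulnA in h.
  have cu : coprime #[u] (2 ^ (n - 2) * 2).
    rewrite -expnSr coprimeXr // coprimen2.
    apply: (@dvdn_odd _ t) => //; by rewrite order_dvdn ut.
  by rewrite -(Gauss_dvdl _ cu) mulnC.
have mle : m <= #[u].
  have h3 : #|Q| <= #[u] * ((2 ^ (n - 2)).*2 * 2).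
    apply: (leq_trans Qle); rewrite leq_mul2l; apply/orP; right.
    by apply: (leq_trans cPle); rewrite leq_mul2r oxle orbT.
  have h4 := leq_trans hc h3; move: h4.
  rewrite /k -!muln2 (mulnC _ m) -!mulnA leq_pmul2r; first by [].
  by rewrite muln_gt0 expn_gt0.
have om' : #[u] = m by apply/eqP; rewrite eqn_leq mle (dvdn_leq m0 oum).
have xcase : (x \in <[X]> -> u ^+ a = u) /\ (x \notin <[X]> -> n = 3 /\ u ^+ a = u^-1).
  split; first by move=> xX; rewrite -xu (cyc_comm xX uX).
  move=> xX; have [x2 Hc] := Hout x xQ xX; split; last by rewrite -xu Hc.
  have x4 : x ^+ 4 = 1 by rewrite (expgM x 2 2) x2 -expgM muln2 -eX expg_order.
  have ox4 : #[x] <= 4 by apply: dvdn_leq; rewrite // order_dvdn x4.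
  have h3 : #|Q| <= m * (4 * 2).
    apply: (leq_trans Qle); rewrite om' leq_mul2l; apply/orP; right.
    by apply: (leq_trans cPle); rewrite leq_mul2r ox4 orbT.
  have h4 := leq_trans hc h3; move: h4.
  rewrite /k -!muln2 (mulnC _ m) -!mulnA leq_pmul2l; last by [].
  move=> h5; have : 2 ^ (n - 2) <= 2 ^ 1 by rewrite expn1; clear -h5; lia.
  by rewrite leq_exp2l // => h6; clear -h6 n3; lia.
have ycase : (y \in <[X]> -> u ^+ b = u) /\ (y \notin <[X]> -> u ^+ b = u^-1).
  split; first by move=> yX; rewrite -yu (cyc_comm yX uX).
  by move=> yX; have [_ Hc] := Hout y yQ yX; rewrite -yu Hc.
split => //.
case xX: (x \in <[X]>).
  case yX: (y \in <[X]>); first by case: notboth.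
  by left; split; [apply: xcase.1 | apply: ycase.2; rewrite yX].
have [n3' ua] := xcase.2 (negbT xX).
right; split => //; split => //.
case yX: (y \in <[X]>); first by left; apply: ycase.1.
by right; apply: ycase.2; rewrite yX.
Qed.

Lemma gen_cop (gT : finGroupType) (w : gT) e : coprime e #[w] -> w \in <[w ^+ e]>.
Proof.
move=> ce; have -> : <[w ^+ e]> = <[w]>; last exact: cycle_id.
apply/eqP; rewrite eqEcard cycleX -!orderE orderXgcd gcdnC (eqP ce) divn1 leqnn.
by [].
Qed.

Lemma Qgen (gT : finGroupType) (w g h : gT) n m :
  2 < n -> odd m -> w ^+ m = 1 ->
  g * w * g^-1 = w -> h * w * h^-1 = w^-1 ->
  g ^+ (2 ^ (n - 2)) = h ^+ 2 -> h * g * h^-1 = g^-1 ->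
  [/\ (g * w) ^+ (2 ^ (n - 2) * m) = h ^+ 2, h * (g * w) * h^-1 = (g * w)^-1,
      w \in <[g * w]> <*> <[h]>, g \in <[g * w]> <*> <[h]> & h \in <[g * w]> <*> <[h]>].
Proof.
move=> n3 om wm gw hw gh hg.
have [og _ _ _] := Qbound gh hg.
have g4 : g ^+ (2 ^ (n - 2)).*2 = 1 by apply/eqP; rewrite -order_dvdn.
have h4 : (h ^+ 2) ^+ 2 = 1 by rewrite -gh -expgM muln2.
have cgw : commute g w by rewrite /commute -{2}gw mulgKV.
have hJ : h \in <[g * w]> <*> <[h]> by rewrite mem_gen // inE cycle_id orbT.
have gwJ : g * w \in <[g * w]> <*> <[h]> by rewrite mem_gen // inE cycle_id.
have wJ : w \in <[g * w]> <*> <[h]>.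
  have ew : (g * w) ^+ (2 ^ (n - 2)).*2 = w ^+ (2 ^ (n - 2)).*2 by rewrite expgMn // g4 mul1g.
  have : w \in <[w ^+ (2 ^ (n - 2)).*2]>.
    apply: gen_cop; rewrite -muln2 -expnSr coprime_pexpl // coprime2n.
    by apply: (@dvdn_odd _ m) => //; rewrite order_dvdn wm.
  rewrite -ew => /(subsetP (cycleX _ _)) => H.
  by rewrite mem_gen // inE H.
split => //.
- rewrite expgMn //.
  have -> : w ^+ (2 ^ (n - 2) * m) = 1 by rewrite mulnC expgM wm expg1n.
  by rewrite mulg1 expgM gh -(expg_mod m h4) modn2 om expg1.
- rewrite !conjVE conjMg -!conjVE hg hw invMg.
  by rewrite -invMg cgw invMg.
suff : (g * w) * w^-1 \in <[g * w]> <*> <[h]> by rewrite mulgK.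
by rewrite groupM ?groupV.
Qed.


Lemma Q8 (gT : finGroupType) (x y : gT) :
  x ^+ 2 = y ^+ 2 -> y * x * y^-1 = x^-1 ->
  [/\ x * y * x^-1 = y^-1, (x * y) ^+ 2 = x ^+ 2 & x * (x * y) * x^-1 = (x * y)^-1].
Proof.
move=> h1 h2.
have yx : y * x = x^-1 * y by rewrite -h2 mulgKV.
have yy : y * y = x * x by move: h1; rewrite !expgS !expg0 !mulg1.
have yxy : y * x * y = x by rewrite yx -mulgA yy mulKg.
have xy' : x * y = y^-1 * x by rewrite -{2}yxy !mulgA mulVg mul1g.
have i1 : x * y * x^-1 = y^-1 by rewrite xy' mulgK.
split => //.
  by rewrite expgS expg1 -mulgA (mulgA y) yxy expgS expg1.
rewrite -mulgA i1 invMg.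
by rewrite -h2 !mulgA mulVg mul1g.
Qed.

Lemma transferX (qT rT : finGroupType) (u : qT) (w : rT) m e f :
  #[u] = m -> w ^+ m = 1 -> u ^+ e = u ^+ f -> w ^+ e = w ^+ f.
Proof.
move=> ou wm /eqP; rewrite eq_expg_mod_order ou => /eqP hef.
apply/eqP; rewrite eq_expg_mod_order.
have dw : #[w] %| m by rewrite order_dvdn wm.
by rewrite -(modn_dvdm e dw) hef modn_dvdm.
Qed.

Lemma invE (gT : finGroupType) (w : gT) m : 0 < m -> w ^+ m = 1 -> w^-1 = w ^+ m.-1.
Proof.
move=> m0 wm; apply: (mulgI w); rewrite mulgV -expgS prednK //.
Qed.


Lemma modz_dvd_nat (r : int) (t m : nat) : (m %| t)%N -> modz (modz r t) m = modz r m.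
Proof.
move=> /dvdnP[c ->]; rewrite [in RHS](divz_eq r (c * m)%N) PoszM GRing.mulrA.
by rewrite modzMDl.
Qed.

Lemma rmod (r : int) (t m : nat) : (0 < t)%N -> (m %| t)%N ->
  ((r = 1 %[mod m])%Z <-> (absz (r %% t)%Z = 1 %[mod m])%N).
Proof.
move=> t0 mt.
have h0 : (0 <= modz r t)%R by apply: modz_ge0; rewrite eqz_nat -lt0n.
have eR : modz r t = absz (r %% t)%Z by rewrite gez0_abs.
rewrite -(modz_dvd_nat r mt) eR !modz_nat; split; first by case.
by move=> ->.
Qed.

Lemma homQP (gT : finGroupType) (G : {set gT}) k :
  reflect (exists X Y, [/\ <[X]> <*> <[Y]> = G, X ^+ k = Y ^+ 2 & Y * X * Y^-1 = X^-1])
  (G \homg Grp (x : y : (x ^+ k = y ^+ 2, y * x * y^-1 = x^-1))).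
Proof.
apply: (iffP existsP) => [[[X Y]] /= | [X [Y [h1 h2 h3]]]].
  rewrite !xpair_eqE /= => /and3P[/eqP h1 /eqP h2 /eqP h3]. by exists X, Y.
by exists (X, Y); rewrite /= !xpair_eqE /= h1 h2 h3 !eqxx.
Qed.

Lemma homCQP (gT : finGroupType) (G : {set gT}) m a b n :
  reflect (exists w x y, [/\ <[w]> <*> <[x]> <*> <[y]> = G, w ^+ m = 1,
     x ^+ (2 ^ (n - 2)) = y ^+ 2, y * x * y^-1 = x^-1 &
     x * w * x^-1 = w ^+ a /\ y * w * y^-1 = w ^+ b])
  (G \homg Grp (w : x : y :
    (w ^+ m = 1, x ^+ (2 ^ (n - 2)) = y ^+ 2, y * x * y^-1 = x^-1,
     x * w * x^-1 = w ^+ a, y * w * y^-1 = w ^+ b))).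
Proof.
apply: (iffP existsP) => [[[[w x] y]] /= | [w [x [y [h1 h2 h3 h4 [h5 h6]]]]]].
  rewrite !xpair_eqE /= => /and5P[/eqP h1 /eqP h2 /eqP h3 /eqP h4 /andP[/eqP h5 /eqP h6]].
  by exists w, x, y.
by exists (w, x, y); rewrite /= !xpair_eqE /= h1 h2 h3 h4 h5 h6 !eqxx.
Qed.

Lemma homGP (gT : finGroupType) (G : {set gT}) n t s (r : int) a b :
  reflect (exists u v x y, [/\ <[u]> <*> <[v]> <*> <[x]> <*> <[y]> = G,
     [/\ u ^+ t = 1, v ^+ s = 1 & v * u * v^-1 = u ^+ (absz (r %% t)%Z)],
     x ^+ (2 ^ (n - 2)) = y ^+ 2, y * x * y^-1 = x^-1 &
     [/\ x * u * x^-1 = u ^+ a, x * v * x^-1 = v,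
         y * u * y^-1 = u ^+ b & y * v * y^-1 = v]])
  (G \homg Grp (u : v : x : y :
    (u ^+ t = 1, v ^+ s = 1, v * u * v^-1 = u ^+ (absz (r %% t)%Z),
     x ^+ (2 ^ (n - 2)) = y ^+ 2, y * x * y^-1 = x^-1,
     x * u * x^-1 = u ^+ a, x * v * x^-1 = v,
     y * u * y^-1 = u ^+ b, y * v * y^-1 = v))).
Proof.
apply: (iffP existsP) => [[[[[u v] x] y]] /= | [u [v [x [y [h0 [h1 h2 h3] h4 h5 [h6 h7 h8 h9]]]]]]].
  rewrite !xpair_eqE /= => /and5P[/eqP h0 /eqP h1 /eqP h2 /eqP h3 /and5P[/eqP h4 /eqP h5 /eqP h6 /eqP h7 /andP[/eqP h8 /eqP h9]]].
  by exists u, v, x, y.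
by exists (u, v, x, y); rewrite /= !xpair_eqE /= h0 h1 h2 h3 h4 h5 h6 h7 h8 h9 !eqxx.
Qed.

Lemma joinmem3 (gT : finGroupType) (Q : {group gT}) (u x y : gT) :
  <[u]> <*> <[x]> <*> <[y]> = Q -> [/\ u \in Q, x \in Q & y \in Q].
Proof.
move=> hQ; have := subxx Q; rewrite -{1}hQ !join_subG !cycle_subG.
by case/andP => /andP[-> ->] ->.
Qed.

Theorem lemma1p7 (gT : finGroupType) (G : {group gT}) (n t s : nat) (r : int)
    (a b m : nat) :
  3 <= n -> 0 < t -> 0 < s -> odd t -> odd s -> coprime t s ->
  ((r ^+ s)%R = 1 %[mod t])%Z ->
  a ^ 2 = 1 %[mod t] -> b ^ 2 = 1 %[mod t] ->
  isG G n t s r a b ->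
  0 < m -> odd m ->
  (exists H : {group gT}, H <| G /\ isQ (G / H)%g (2 ^ (n - 2) * m)) <->
  [/\ m %| t, (r = 1 %[mod m])%Z &
      exists (hT : finGroupType) (K : {group hT}),
        isQ K (2 ^ (n - 2) * m) /\ isCQ K m a b n].
Proof.
move=> n3 t0 s0 ot os cts hr ha hb hG m0 om.
have k0 : 0 < 2 ^ (n - 2) * m by rewrite muln_gt0 expn_gt0 m0.
split.
- case=> H [nHG hQ].
  have homQ := isoGrp_hom (G := (G / H)%G) hQ.
  case/homQP: homQ => X [Y [hXY h1 h2]].
  set k := (2 ^ (n - 2) * m)%N in k0 hQ h1.
  have hk2 : (k + k = (k + k - 2).+2)%N by clear -k0; lia.
  have R0hom : (R0 (k + k - 2) k) \homg Grp (x : y : (x ^+ k = y ^+ 2, y * x * y^-1 = x^-1)).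
    apply/homQP; exists (pX (k + k - 2)), (pY (k + k - 2) k); split => //.
      exact: rel1.
    exact: rel2.
  have := hQ _ (R0 (k + k - 2) k); rewrite R0hom => /leq_homg hle.
  have hc : k.*2.*2 <= #|(G / H)%G|.
    apply: leq_trans (leq_trans (R0_card hk2) hle); by rewrite -!muln2 addnn -muln2 mulnC.
  have homGq := homGrp_trans (quotient_homg (normal_norm nHG)) (isoGrp_hom hG).
  case/homGP: homGq => u [v [x [y [hJ [ut vs vu] xy yx [xu xv yu yv]]]]].
  have [v1 ou cases] := analysis n3 ot os om m0 hXY h1 h2 hc hJ ut vs vu xy yx xu xv yu yv.
  subst v.
  have mt : m %| t by rewrite -ou order_dvdn ut.
  split => //.
    apply/(rmod r t0 mt).
    have : u ^+ 1 = u ^+ (absz (r %% t)%Z) by rewrite -vu mul1g invg1 mulg1 expg1.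
    by move/eqP; rewrite eq_expg_mod_order ou => /eqP ->.
  exists _, (G / H)%G; split => //.
  move=> rT R; apply/idP/idP => hR.
    apply: homGrp_trans hR _; apply/homCQP; exists u, x, y; split => //.
      by rewrite cycle1 joingG1 in hJ.
    by rewrite -ou expg_order.
  rewrite (hQ _ R).
  case/homCQP: hR => w [x' [y' [hR wm xy' yx' [xw yw]]]].
  have [wR xR yR] := joinmem3 hR.
  apply/homQP.
  have wInv : w^-1 = w ^+ m.-1 := invE m0 wm.
  have uInv : u^-1 = u ^+ m.-1 by rewrite invg_expg ou.
  case: cases => [[ua ub] | [n3' [ua ub]]].
    have xw1 : x' * w * x'^-1 = w.
      by rewrite xw (transferX ou wm (_ : u ^+ a = u ^+ 1)) ?expg1.
    have yw1 : y' * w * y'^-1 = w^-1.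
      by rewrite yw wInv (transferX ou wm (_ : u ^+ b = u ^+ m.-1)) // -uInv.
    have [e1 e2 wJ gJ hJ'] := Qgen n3 om wm xw1 yw1 xy' yx'.
    exists (x' * w), y'; split => //.
    apply/eqP; rewrite eqEsubset; apply/andP; split.
      by rewrite join_subG !cycle_subG groupM.
    by rewrite -hR !join_subG !cycle_subG wJ gJ hJ'.
  subst n.
  have xy2 : x' ^+ 2 = y' ^+ 2 by [].
  have [i1 i2 i3] := Q8 xy2 yx'.
  have xw1 : x' * w * x'^-1 = w^-1.
    by rewrite xw wInv (transferX ou wm (_ : u ^+ a = u ^+ m.-1)) // -uInv.
  case: ub => ub.
    have yw1 : y' * w * y'^-1 = w.
      by rewrite yw (transferX ou wm (_ : u ^+ b = u ^+ 1)) ?expg1.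
    have [e1 e2 wJ gJ hJ'] := Qgen n3 om wm yw1 xw1 (esym xy2) i1.
    exists (y' * w), x'; split => //.
    apply/eqP; rewrite eqEsubset; apply/andP; split.
      by rewrite join_subG !cycle_subG groupM.
    by rewrite -hR !join_subG !cycle_subG wJ gJ hJ'.
  have yw1 : y' * w * y'^-1 = w^-1.
    by rewrite yw wInv (transferX ou wm (_ : u ^+ b = u ^+ m.-1)) // -uInv.
  have xyw : (x' * y') * w * (x' * y')^-1 = w.
    rewrite invMg !mulgA -(mulgA x' y' w) -(mulgA x' (y' * w) y'^-1) yw1.
    by rewrite conjVE conjVg -conjVE xw1 invgK.
  have [e1 e2 wJ gJ hJ'] := Qgen n3 om wm xyw xw1 i2 i3.
  exists (x' * y' * w), x'; split => //.
  apply/eqP; rewrite eqEsubset; apply/andP; split.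
    by rewrite join_subG !cycle_subG !groupM.
  rewrite -hR !join_subG !cycle_subG wJ hJ' /=.
  suff : x'^-1 * (x' * y') \in <[x' * y' * w]> <*> <[x']> by rewrite mulKg.
  by rewrite groupM ?groupV.
case=> mt rm [hT [K [hQK hCQ]]].
case/homCQP: (isoGrp_hom hCQ) => w [x [y [hK wm xy yx [xw yw]]]].
have homK : K \homg Grp (u : v : x : y :
    (u ^+ t = 1, v ^+ s = 1, v * u * v^-1 = u ^+ (absz (r %% t)%Z),
     x ^+ (2 ^ (n - 2)) = y ^+ 2, y * x * y^-1 = x^-1,
     x * u * x^-1 = u ^+ a, x * v * x^-1 = v,
     y * u * y^-1 = u ^+ b, y * v * y^-1 = v)).
  apply/homGP; exists w, 1, x, y; split => //.
  - by rewrite cycle1 joingG1.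
  - split; first by case/dvdnP: mt => c ->; rewrite mulnC expgM wm expg1n.
      by rewrite expg1n.
    rewrite mul1g invg1 mulg1; apply/eqP.
    rewrite -{1}(expg1 w) eq_expg_mod_order.
    have dw : #[w] %| m by rewrite order_dvdn wm.
    have := (rmod r t0 mt).1 rm.
    by rewrite -(modn_dvdm 1 dw) -(modn_dvdm (absz _) dw) => ->.
  by split => //; rewrite mulg1 mulgV.
have := hG _ K; rewrite homK => /homgP[f fG].
exists ('ker f)%G; split; first exact: ker_normal.
apply: (isoGrp_trans (first_isog f)).
suff -> : (f @* G)%G = K by [].
by apply: val_inj.
Qed.
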